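(* Let $\alpha,\beta,\gamma\ge0$ with $\alpha(\beta+\gamma)>0$. Then for every $\theta\in(0,2\pi)$ both roots $\lambda\in\mathbb C$ of $$\lambda^2+\gamma\lambda+\beta\lambda(1-e^{i\theta})+\alpha(2-e^{i\theta}-e^{-i\theta})=0$$ have strictly negative real part.
   Context: This is the characteristic equation of the linearised car-following system $\ddot s_n=-\gamma\dot s_n+\beta(\dot s_{n+1}-\dot s_n)+\alpha(s_{n+1}-2s_n+s_{n-1})$ on a ring (optimal velocity function constant), obtained from the ansatz $s_n=\xi e^{\lambda t}e^{in\theta}$. *)

(* Defs.v *)
From mathcomp Require Import all_boot all_algebra.
From mathcomp Require Import reals trigo.
From mathcomp Require Export complex.
Import GRing.Theory Num.Theory.
Local Open Scope ring_scope.
Local Open Scope complex_scope.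

Definition expi {R : realType} (t : R) : R[i] := (cos t +i* sin t).

Definition reC {R : realType} (z : R[i]) : R := complex.Re z.

Definition charEq {R : realType} (alpha beta gamma theta : R) (lam : R[i]) : R[i] :=
  lam ^+ 2 + gamma%:C * lam + beta%:C * lam * (1 - expi theta)
  + alpha%:C * (2%:R - expi theta - expi (- theta)).

(* Main.v *)
Require Import Defs.
From mathcomp Require Import all_boot all_algebra.
From mathcomp Require Import reals trigo.
From mathcomp Require Import complex.
From mathcomp Require Import ring lra.
Import GRing.Theory Num.Theory.
Local Open Scope ring_scope.

Lemma cos_lt1_aux (R : realType) (theta : R) :
  0 < theta < 2 * pi -> cos theta < 1.
Proof.
move=> /andP[h0 h1].
set t := theta / 2.
have ht : theta = t *+ 2 by rewrite /t mulr2n; lra.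
have st : 0 < sin t.
  apply: sin_gt0_pi; apply/andP; split; rewrite /t; lra.
rewrite ht cos_mulr2n cos2sin2.
have : 0 < sin t ^+ 2 by rewrite exprn_gt0.
lra.
Qed.

Theorem mainTheorem7 (R : realType) (alpha beta gamma : R) :
  0 <= alpha -> 0 <= beta -> 0 <= gamma -> 0 < alpha * (beta + gamma) ->
  forall theta : R, 0 < theta < 2 * pi ->
  forall lam : R[i], charEq alpha beta gamma theta lam = 0 -> reC lam < 0.
Proof.
move=> ha hb hg hab theta hth [x y].
rewrite /charEq /expi cosN sinN expr2 => H.
have H1 := congr1 (@complex.Re R) H.
have H2 := congr1 (@complex.Im R) H.
simpl in H1, H2.
rewrite /reC /=.
have hc := @cos_lt1_aux _ _ hth.
move: H1 H2 hc.
set c := cos theta; set s := sin theta => H1 H2 hc.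
have ha' : 0 < alpha.
  rewrite lt0r ha andbT; apply/eqP => a0; move: hab; rewrite a0 mul0r; lra.
have hbg : 0 < beta + gamma.
  by move: hab; rewrite pmulr_rgt0.
set p := gamma + beta * (1 - c).
set r := 2 * alpha * (1 - c).
set q := beta * s.
have hp : 0 < p.
  rewrite /p; have : 0 <= beta * (1 - c) by apply: mulr_ge0; lra.
  have : gamma + beta * (1 - c) >= gamma + beta * 0 - beta * 0 by nra.
  nra.
have hr : 0 < r by rewrite /r; nra.
have [//|hx] := ltrP x 0; exfalso.
set d := 2 * x + p.
have hd : 0 < d by rewrite /d; lra.
have E1 : x ^+ 2 + p * x + r = y ^+ 2 - q * y.
  rewrite /p /r /q expr2 expr2; lra.
have E2 : y * d = q * x.
  rewrite /d /p /q; lra.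
have key : (x ^+ 2 + p * x + r) * d ^+ 2 = - (q ^+ 2) * x * (x + p).
  rewrite E1.
  have -> : (y ^+ 2 - q * y) * d ^+ 2 = (y * d) ^+ 2 - q * (y * d) * d by ring.
  rewrite E2 /d; ring.
have L : 0 < (x ^+ 2 + p * x + r) * d ^+ 2.
  apply: mulr_gt0; last by rewrite exprn_gt0.
  have : 0 <= x ^+ 2 by rewrite sqr_ge0.
  have : 0 <= p * x by apply: mulr_ge0; lra.
  lra.
have : 0 <= q ^+ 2 * x * (x + p).
  apply: mulr_ge0; last lra.
  apply: mulr_ge0 => //; first exact: sqr_ge0.
lra.
Qed.
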